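(* Fix $i\in[n]$, arbitrary $\mathbf{b}_{-i}^{(1)},\dots,\mathbf{b}_{-i}^{(T)}\in B^{n-1}$, and formats $\mathcal{M}^{(1)},\dots,\mathcal{M}^{(T)}$ all satisfying allocation monotonicity. Suppose bidder $i$ uses $s_{i,\boldsymbol{\pi}^{(t)}}$ at each round $t$, for some quantile strategies $\boldsymbol{\pi}^{(t)}\in\Delta([K+1])$. Then \[ \max_{s\in\mathcal{S}}\sum_{t\in[T]}\big(u_i^{(t)}(s)-u_i^{(t)}(s_{i,\boldsymbol{\pi}^{(t)}})\big)=\max_{\boldsymbol{\pi}\in\Delta([K+1])}\sum_{t\in[T]}\big(q_i^{(t)}(\boldsymbol{\pi})-q_i^{(t)}(\boldsymbol{\pi}^{(t)})\big). \]
   Context: Bidder $i$'s value $v_i\in[0,1]$ is drawn from a continuous distribution $\mathcal{D}_i$ on $[0,1]$ with CDF $F_i$ and quantile function $F_i^{-1}(y):=\inf\{v\in[0,1]:F_i(v)\ge y\}$. The bid set is $B:=\{j/K:j=0,\dots,K\}$; $\mathcal{S}$ is the set of all functions $s:[0,1]\to B$. Auction formats $\mathcal{M}^{(t)}=(\mathbf{x}^{(t)},\mathbf{p}^{(t)})$, $\mathbf{x}^{(t)}:B^n\to\Delta([n])$ (nonnegative entries summing to at most 1), $\mathbf{p}^{(t)}:B^n\to[0,1]^n$. Allocation monotonicity: $x_i^{(t)}(b_i,\mathbf{b}_{-i})\le x_i^{(t)}(b_i',\mathbf{b}_{-i})$ whenever $b_i\le b_i'$. Utility: $u_i^{(t)}(s):=\mathbb{E}_{v_i\sim\mathcal{D}_i}[x_i^{(t)}(s(v_i),\mathbf{b}_{-i}^{(t)})v_i-p_i^{(t)}(s(v_i),\mathbf{b}_{-i}^{(t)})]$.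 Quantile strategies are $\boldsymbol{\pi}\in\Delta([K+1])$ (probability simplex); with $\Pi_0:=0$, $\Pi_j:=\sum_{\ell\le j}\pi_\ell$, the strategy $s_{i,\boldsymbol{\pi}}$ bids $0$ on $[0,F_i^{-1}(\Pi_1)]$ and $\frac{j-1}{K}$ on $(F_i^{-1}(\Pi_{j-1}),F_i^{-1}(\Pi_j)]$ for $j=2,\dots,K+1$. Quantile utility: $q_i^{(t)}(\boldsymbol{\pi}):=u_i^{(t)}(s_{i,\boldsymbol{\pi}})$. *)

(* Defs.v *)
From HB Require Import structures.
From mathcomp Require Import all_boot all_order all_algebra.
From mathcomp Require Import all_classical all_reals all_analysis.
Set Implicit Arguments. Unset Strict Implicit. Unset Printing Implicit Defensive.
Import Order.TTheory GRing.Theory Num.Theory.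
Local Open Scope classical_set_scope.
Local Open Scope ring_scope.

(* Bids: the index j : 'I_K.+1 stands for the bid j/K in B = {0,1/K,...,1};
   the order on indices coincides with the order on bids. *)
Definition profile (n K : nat) := {ffun 'I_n -> 'I_K.+1}.

Definition upd (n K : nat) (b : profile n K) (j : 'I_n) (c : 'I_K.+1)
  : profile n K := [ffun k => if k == j then c else b k].

Definition is_format (R : realType) (n K : nat)
  (x p : profile n K -> 'I_n -> R) : Prop :=
  (forall b j, 0 <= x b j) /\ (forall b, \sum_(j < n) x b j <= 1) /\
  (forall b j, 0 <= p b j <= 1).

Definition alloc_monotone (R : realType) (n K : nat)
  (x : profile n K -> 'I_n -> R) : Prop :=
  forall (b : profile n K) (j : 'I_n) (c c' : 'I_K.+1),
    (c <= c')%N -> x (upd b j c) j <= x (upd b j c') j.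

Definition cont_dist01 (R : realType) (P : probability R R) : Prop :=
  P `[0, 1]%classic = 1%E /\ (forall v : R, P [set v] = 0%E).

Definition cdf (R : realType) (P : probability R R) (v : R) : R :=
  fine (P [set w : R | w <= v]).

Definition quantile (R : realType) (P : probability R R) (y : R) : R :=
  inf [set v : R | 0 <= v <= 1 /\ y <= cdf P v].

(* A strategy s : [0,1] -> B (extended arbitrarily outside [0,1]); for the
   expectation to make sense we require measurability. *)
Definition strategy_measurable (R : realType) (K : nat) (s : R -> 'I_K.+1)
  : Prop := forall j : 'I_K.+1, measurable (s @^-1` [set j]).

Definition utility (R : realType) (n K : nat) (P : probability R R)
  (x p : profile n K -> 'I_n -> R) (i : 'I_n) (bmi : profile n K)
  (s : R -> 'I_K.+1) : R :=
  Rintegral P `[0, 1]%classic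
    (fun v => x (upd bmi i (s v)) i * v - p (upd bmi i (s v)) i).

(* probability simplex Delta([K+1]); index l stands for pi_{l+1} *)
Definition simplex (R : realType) (K : nat) (pi : 'I_K.+1 -> R) : Prop :=
  (forall l, 0 <= pi l) /\ \sum_(l < K.+1) pi l = 1.

(* Pi_j = sum_{l <= j} pi_l  (paper indexing, j = 0..K+1) *)
Definition Pi (R : realType) (K : nat) (pi : 'I_K.+1 -> R) (j : nat) : R :=
  \sum_(l < K.+1 | (l < j)%N) pi l.

(* v lies in the interval on which s_{i,pi} bids j/K *)
Definition qinterval (R : realType) (K : nat) (P : probability R R)
  (pi : 'I_K.+1 -> R) (j : 'I_K.+1) (v : R) : bool :=
  if (j == 0 :> nat) then (0 <= v) && (v <= quantile P (Pi pi 1))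
  else (quantile P (Pi pi j) < v) && (v <= quantile P (Pi pi j.+1)).

(* the quantile strategy s_{i,pi} (bid 0 wherever undefined by the paper) *)
Definition qstrat (R : realType) (K : nat) (P : probability R R)
  (pi : 'I_K.+1 -> R) (v : R) : 'I_K.+1 :=
  odflt ord0 [pick j : 'I_K.+1 | qinterval P pi j v].

Definition qutility (R : realType) (n K : nat) (P : probability R R)
  (x p : profile n K -> 'I_n -> R) (i : 'I_n) (bmi : profile n K)
  (pi : 'I_K.+1 -> R) : R :=
  utility P x p i bmi (qstrat P pi).

(* Main.v *)
Require Import Defs.
From HB Require Import structures.
From mathcomp Require Import all_boot all_order all_algebra.
From mathcomp Require Import all_classical all_reals all_analysis.
Import Order.TTheory GRing.Theory Num.Theory.
Import numFieldNormedType.Exports.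
Local Open Scope classical_set_scope.
Local Open Scope ring_scope.
Set Implicit Arguments. Unset Strict Implicit. Unset Printing Implicit Defensive.
From mathcomp Require Import lra measurable_realfun lebesgue_integral_theory.lebesgue_Rintegral.
Definition ismax (R : realType) (K : nat) (g : 'I_K.+1 -> R -> R) (j : 'I_K.+1) (v : R) : bool :=
  [forall k, g k v <= g j v].
Definition sstar (R : realType) (K : nat) (g : 'I_K.+1 -> R -> R) (v : R) : 'I_K.+1 :=
  inord (\max_(j < K.+1 | ismax g j v) j).
Lemma ismax_ex (R : realType) (K : nat) (g : 'I_K.+1 -> R -> R) v : exists j, ismax g j v.
Proof.
exists [arg max_(j > ord0) g j v]%O.
case: Order.TotalTheory.arg_maxP => // j _ H; apply/forallP => k; exact: H.
Qed.
Lemma sstar_spec (R : realType) (K : nat) (g : 'I_K.+1 -> R -> R) v :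
  ismax g (sstar g v) v /\ forall j, ismax g j v -> (j <= sstar g v)%N.
Proof.
have [j0 hj0] := ismax_ex g v.
have hc : (0 < #|[pred j | ismax g j v]|)%N.
  by apply/card_gt0P; exists j0.
have [i0 hi0 hM] := eq_bigmax_cond (fun j : 'I_K.+1 => nat_of_ord j) hc.
have hM' : (\max_(j < K.+1 | ismax g j v) j)%N = i0.
  by rewrite -hM; apply: eq_bigl => j; rewrite inE.
have hs : sstar g v = i0.
  by apply: val_inj; rewrite /sstar /= hM' inordK.
rewrite hs; split; first by move: hi0; rewrite inE.
move=> j hj; rewrite -hM'.
exact: (@leq_bigmax_cond _ (fun j => ismax g j v) (fun j : 'I_K.+1 => nat_of_ord j) j hj).
Qed.
Lemma sstar_mono (R : realType) (K : nat) (g : 'I_K.+1 -> R -> R) (a c : 'I_K.+1 -> R)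
  (hg : forall j v, g j v = a j * v - c j) (ha : forall j k : 'I_K.+1, (j <= k)%N -> a j <= a k)
  v w : v <= w -> (sstar g v <= sstar g w)%N.
Proof.
move=> hvw.
have [hmv _] := sstar_spec g v.
have [hmw hlw] := sstar_spec g w.
set j := sstar g v in hmv *; set j' := sstar g w in hmw hlw *.
case: (leqP j j') => // hlt.
have h1 : g j' v <= g j v by move/forallP: hmv; apply.
have h2 : g j w < g j' w.
  rewrite ltNge; apply/negP => hle.
  have : (j <= j')%N.
    apply: hlw; apply/forallP => k; apply: le_trans hle.
    by move/forallP: hmw; apply.
  by rewrite leqNgt hlt.
have ha' : a j' <= a j by apply: ha; exact: ltnW.
move: h1 h2; rewrite !hg => h1 h2.
have : 0 <= (a j - a j') * (w - v) by apply: mulr_ge0; lra.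
nra.
Qed.
Lemma mfun_all (R : realType) (I : Type) (s : seq I) (b : I -> R -> bool) :
  (forall k, measurable_fun setT (b k)) -> measurable_fun setT (fun v => all (fun k => b k v) s).
Proof.
move=> hb; elim: s => [|k s IH] /=; first exact: measurable_cst.
exact: measurable_and.
Qed.
Lemma mfun_forall (R : realType) (I : finType) (b : I -> R -> bool) :
  (forall k, measurable_fun setT (b k)) -> measurable_fun setT (fun v => [forall k, b k v]).
Proof.
move=> hb; have -> : (fun v => [forall k, b k v]) = (fun v => all (fun k => b k v) (enum I)).
  apply/funext => v; apply/forallP/allP => H k.
    by move=> _; exact: H.
  by apply: H; rewrite mem_enum.
exact: (mfun_all (enum I) hb).
Qed.
Lemma mfun_exists (R : realType) (I : finType) (b : I -> R -> bool) :
  (forall k, measurable_fun setT (b k)) -> measurable_fun setT (fun v => [exists k, b k v]).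
Proof.
move=> hb; have -> : (fun v => [exists k, b k v]) = (fun v => ~~ [forall k, ~~ b k v]).
  by apply/funext => v; rewrite negb_forall; apply: eq_existsb => k; rewrite negbK.
apply: measurable_neg; apply: mfun_forall => k; exact: measurable_neg.
Qed.
Lemma mset_of_bool (R : realType) (f : R -> bool) :
  measurable_fun setT f -> measurable [set v | f v].
Proof.
move=> hf; have := hf measurableT [set true] I.
by rewrite setTI; congr measurable; apply/seteqP; split => v /=.
Qed.
Lemma mbool_of_set (R : realType) (f : R -> bool) :
  measurable [set v | f v] -> measurable_fun setT f.
Proof.
move=> hf; apply: (measurable_fun_bool true).
by rewrite setTI; move: hf; congr measurable; apply/seteqP; split => v /=.
Qed.
Lemma sstar_le (R : realType) (K : nat) (g : 'I_K.+1 -> R -> R) (m : nat) v :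
  (sstar g v <= m)%N = [forall k : 'I_K.+1, (m < k)%N ==> ~~ ismax g k v].
Proof.
have [h1 h2] := sstar_spec g v.
apply/idP/forallP => [H k|H].
  apply/implyP => hk; apply/negP => hm.
  by have := leq_trans (h2 _ hm) H; rewrite leqNgt hk.
rewrite leqNgt; apply/negP => hlt.
by have := H (sstar g v); rewrite hlt h1.
Qed.
Lemma sstar_meas (R : realType) (K : nat) (g : 'I_K.+1 -> R -> R) (m : nat) :
  (forall j, measurable_fun setT (g j)) ->
  measurable_fun setT (fun v => (sstar g v <= m)%N).
Proof.
move=> hg.
have -> : (fun v => (sstar g v <= m)%N) =
   (fun v => [forall k : 'I_K.+1, (m < k)%N ==> ~~ ismax g k v]).
  by apply/funext => v; rewrite sstar_le.
apply: mfun_forall => k; case: (m < k)%N => /=; last exact: measurable_cst.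
apply: measurable_neg; rewrite /ismax; apply: mfun_forall => l.
exact: measurable_fun_ler.
Qed.
Lemma pick_meas (R : realType) (m : nat) (Q : 'I_m.+1 -> R -> bool) :
  (forall j, measurable_fun setT (Q j)) ->
  strategy_measurable (fun v => odflt ord0 [pick j | Q j v]).
Proof.
move=> hQ j.
have -> : (fun v => odflt ord0 [pick j | Q j v]) @^-1` [set j] =
  [set v | [exists w : {ffun 'I_m.+1 -> bool},
             (odflt ord0 [pick k | w k] == j) && [forall k, w k == Q k v]]].
  apply/seteqP; split => v /=.
    move=> hv; apply/existsP; exists [ffun k => Q k v]; apply/andP; split.
      rewrite -hv; apply/eqP; congr odflt; apply: eq_pick => k; by rewrite ffunE.
    by apply/forallP => k; rewrite ffunE.
  case/existsP => w /andP[/eqP <- /forallP hw]; congr odflt; apply: eq_pick => k.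
  by apply/esym/eqP; apply: hw.
apply: mset_of_bool; apply: mfun_exists => w.
case: (odflt ord0 [pick k | w k] == j) => /=; last exact: measurable_cst.
apply: mfun_forall => k.
have -> : (fun v => w k == Q k v) = (fun v => if w k then Q k v else ~~ Q k v).
  by apply/funext => v; case: (w k); case: (Q k v).
by case: (w k); [exact: hQ | exact: measurable_neg].
Qed.
Lemma qstrat_meas (R : realType) (K : nat) (P : probability R R) (pi : 'I_K.+1 -> R) :
  strategy_measurable (qstrat P pi).
Proof.
apply: pick_meas => j; rewrite /qinterval; case: (j == 0 :> nat).
  by apply: measurable_and; apply: measurable_fun_ler => //; exact: measurable_cst.
by apply: measurable_and; [apply: measurable_fun_ltr|apply: measurable_fun_ler] => //;
  exact: measurable_cst.
Qed.
Lemma comp_meas (R : realType) (K : nat) (s : R -> 'I_K.+1) (phi : 'I_K.+1 -> R) :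
  strategy_measurable s -> measurable_fun setT (fun v => phi (s v)).
Proof.
move=> hs.
have -> : (fun v => phi (s v)) = (fun v => \sum_(j <- enum 'I_K.+1) (if s v == j then phi j else 0)).
  apply/funext => v.
  rewrite (bigD1_seq (s v)) ?mem_enum ?enum_uniq //= eqxx big1_seq ?addr0 // => k /andP[hk _].
  by rewrite eq_sym (negbTE hk).
apply: measurable_sum => j; apply: measurable_fun_ifT; last 2 first.
- exact: measurable_cst.
- exact: measurable_cst.
apply: mbool_of_set; move: (hs j); congr measurable.
by apply/seteqP; split => v /= /eqP.
Qed.
Lemma integ_bdd (R : realType) (P : probability R R) (f : R -> R) (M : R) :
  measurable_fun setT f -> (forall v, 0 <= v <= 1 -> `|f v| <= M) ->
  P.-integrable `[0, 1]%classic (EFin \o f).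
Proof.
move=> hf hb; apply: measurable_bounded_integrable.
- exact: measurable_itv.
- by apply: (le_lt_trans (probability_le1 _ _)); [exact: measurable_itv| exact: ltey].
- exact: measurable_funS hf.
exists M; split; first by rewrite num_real.
move=> M' hM' v hv; apply: le_trans (hb v _) _.
  by move: hv; rewrite /= in_itv.
exact: ltW.
Qed.
Lemma x_le1 (R : realType) (n K : nat) (x p : profile n K -> 'I_n -> R) b j :
  is_format x p -> 0 <= x b j <= 1.
Proof.
move=> [h0 [hs _]]; rewrite h0 /=; apply: le_trans (hs b).
rewrite (bigD1 j) //= lerDl; apply: sumr_ge0 => k _; exact: h0.
Qed.
Lemma integ_util (R : realType) (n K : nat) (P : probability R R)
  (x p : profile n K -> 'I_n -> R) i bmi (s : R -> 'I_K.+1) :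
  is_format x p -> strategy_measurable s ->
  P.-integrable `[0, 1]%classic
    (EFin \o (fun v => x (upd bmi i (s v)) i * v - p (upd bmi i (s v)) i)).
Proof.
move=> hf hs; apply: (@integ_bdd _ _ _ 2).
  apply: measurable_funB; last exact: (comp_meas (fun j => p (upd bmi i j) i) hs).
  apply: measurable_funM; last exact: measurable_id.
  exact: (comp_meas (fun j => x (upd bmi i j) i) hs).
move=> v /andP[hv0 hv1].
have /andP[hx0 hx1] := x_le1 (upd bmi i (s v)) i hf.
have /andP[hp0 hp1] : 0 <= p (upd bmi i (s v)) i <= 1 by case: hf => _ [_]; apply.
rewrite ler_norml; apply/andP; split; nra.
Qed.
Definition Pf (R : realType) (P : probability R R) (A : set R) : R := fine (P A).
Lemma PfE (R : realType) (P : probability R R) A : measurable A -> ((Pf P A)%:E = P A)%E.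
Proof. by move=> mA; rewrite /Pf fineK // fin_num_measure. Qed.
Lemma Pf_ge0 (R : realType) (P : probability R R) A : 0 <= Pf P A.
Proof. by rewrite /Pf fine_ge0 // measure_ge0. Qed.
Lemma Pf_le (R : realType) (P : probability R R) A B : measurable A -> measurable B ->
  A `<=` B -> Pf P A <= Pf P B.
Proof. by move=> mA mB AB; rewrite -lee_fin !PfE // le_measure // inE. Qed.
Lemma PfU (R : realType) (P : probability R R) A B : measurable A -> measurable B ->
  A `&` B = set0 -> Pf P (A `|` B) = Pf P A + Pf P B.
Proof.
move=> mA mB AB; apply: EFin_inj; rewrite EFinD !PfE //; last exact: measurableU.
exact: measureU.
Qed.
Lemma Pf0 (R : realType) (P : probability R R) A : measurable A -> Pf P A = 0 -> P A = 0%E.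
Proof. by move=> mA h; rewrite -PfE // h. Qed.
Lemma PfT (R : realType) (P : probability R R) : Pf P setT = 1.
Proof. by rewrite /Pf probability_setT. Qed.
Lemma Pf01 (R : realType) (P : probability R R) : cont_dist01 P -> Pf P `[0, 1]%classic = 1.
Proof. by case=> h _; rewrite /Pf h. Qed.
Lemma Pf_restr (R : realType) (P : probability R R) A : cont_dist01 P -> measurable A ->
  Pf P A = Pf P (A `&` `[0, 1]%classic).
Proof.
move=> hP mA.
have mI : measurable (`[0, 1]%classic : set R) by exact: measurable_itv.
have hC : Pf P (~` `[0, 1]%classic) = 0.
  have := PfU P mI (measurableC mI) (setICr _).
  rewrite setUCr PfT Pf01 //; lra.
have eA : A = (A `&` `[0, 1]%classic) `|` (A `&` ~` `[0, 1]%classic).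
  by rewrite -setIUr setUCr setIT.
have h0 : Pf P (A `&` ~` `[0, 1]%classic) = 0.
  apply/le_anti; rewrite Pf_ge0 andbT.
  apply: le_trans (_ : _ <= Pf P (~` `[0, 1]%classic)) _; last by rewrite hC.
  apply: Pf_le; [exact: measurableI (measurableC mI)|exact: measurableC|exact: subIsetr].
rewrite {1}eA PfU; first last.
- by rewrite setIACA setICr setI0.
- exact: measurableI (measurableC mI).
- exact: measurableI.
by rewrite h0 addr0.
Qed.
Lemma in01 (R : realType) (v : R) : `[0, 1]%classic v <-> 0 <= v <= 1.
Proof. by rewrite /= in_itv. Qed.
Lemma mle (R : realType) (w : R) : measurable [set v : R | v <= w].
Proof. by apply: mset_of_bool; apply: measurable_fun_ler => //; exact: measurable_cst. Qed.
Lemma mlt (R : realType) (w : R) : measurable [set v : R | w < v].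
Proof. by apply: mset_of_bool; apply: measurable_fun_ltr => //; exact: measurable_cst. Qed.
Definition Dset (R : realType) (K : nat) (s : R -> 'I_K.+1) (m : nat) : set R :=
  `[0, 1]%classic `&` [set v | (s v < m)%N].
Lemma mDset (R : realType) (K : nat) (s : R -> 'I_K.+1) m :
  (forall m, measurable [set v | (s v < m)%N]) -> measurable (Dset s m).
Proof. by move=> h; apply: measurableI; [exact: measurable_itv|exact: h]. Qed.
Lemma lemE (R : realType) (K : nat) (P : probability R R) (hP : cont_dist01 P)
  (s : R -> 'I_K.+1)
  (hmono : forall v w, 0 <= v -> v <= w -> w <= 1 -> (s v <= s w)%N)
  (hmeas : forall m, measurable [set v | (s v < m)%N]) m w :
  0 <= w <= 1 -> Pf P (Dset s m) <= Defs.cdf P w ->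
  P (Dset s m `&` [set v | w < v]) = 0%E.
Proof.
move=> /andP[hw0 hw1] hY.
have mD := mDset m hmeas.
have mE : measurable (Dset s m `&` [set v | w < v]) by apply: measurableI => //; exact: mlt.
case: (pselect (exists u, 0 <= u <= w /\ ~ Dset s m u)) => [[u [/andP[hu0 huw] hnu]]|hall].
  suff -> : Dset s m `&` [set v | w < v] = set0 by rewrite measure0.
  apply/seteqP; split => v //= [[/in01/andP[hv0 hv1] hvm] hwv]; exfalso; apply: hnu.
  split; first by apply/in01; rewrite hu0 /=; apply: (le_trans huw hw1).
  apply: leq_ltn_trans hvm; apply: hmono => //; apply: (le_trans huw); exact: ltW.
have hL : [set v | v <= w] `&` `[0, 1]%classic `<=` Dset s m.
  move=> u [/= huw /in01/andP[hu0 hu1]]; apply: contrapT => hn; apply: hall.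
  by exists u; rewrite hu0 huw.
have mL : measurable ([set v | v <= w] `&` `[0, 1]%classic).
  by apply: measurableI; [exact: mle|exact: measurable_itv].
have eD : Dset s m = ([set v | v <= w] `&` `[0, 1]%classic) `|` (Dset s m `&` [set v | w < v]).
  apply/seteqP; split => v.
    move=> hv; case: (leP v w) => hvw.
      by left; split => //; case: hv.
    by right.
  by case => [/hL //|[hD _] //].
have dLE : ([set v | v <= w] `&` `[0, 1]%classic) `&` (Dset s m `&` [set v | w < v]) = set0.
  apply/seteqP; split => v //= [[hvw _] [_ hwv]]; move: (lt_le_trans hwv hvw); by rewrite ltxx.
have := PfU P mL mE dLE; rewrite -eD.
have <- : Pf P [set v | v <= w] = Pf P ([set v | v <= w] `&` `[0, 1]%classic).
  exact: Pf_restr (mle w).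
move=> hsum; apply: Pf0 => //.
have := Pf_ge0 P (Dset s m `&` [set v | w < v]).
rewrite /Defs.cdf -/(Pf P [set v | v <= w]) in hY.
lra.
Qed.
Lemma quant_lb (R : realType) (P : probability R R) y :
  has_lbound [set v : R | 0 <= v <= 1 /\ y <= Defs.cdf P v].
Proof. by exists 0 => u [/andP[hu0 _] _]. Qed.
Lemma lemC1 (R : realType) (K : nat) (P : probability R R)
  (s : R -> 'I_K.+1)
  (hmono : forall v w, 0 <= v -> v <= w -> w <= 1 -> (s v <= s w)%N)
  (hmeas : forall m, measurable [set v | (s v < m)%N]) m v :
  0 <= v <= 1 -> v < Defs.quantile P (Pf P (Dset s m)) -> Dset s m v.
Proof.
move=> /andP[hv0 hv1] hq; split; first by apply/in01; rewrite hv0.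
case h: (s v < m)%N => //; exfalso.
have hsub : Dset s m `<=` [set w | w <= v].
  move=> w [/in01/andP[hw0 hw1] hwm] /=; rewrite leNgt; apply/negP => hvw.
  have := hmono v w hv0 (ltW hvw) hw1 => hle.
  by move: h; rewrite (leq_ltn_trans hle hwm).
have hY : Pf P (Dset s m) <= Defs.cdf P v.
  by apply: Pf_le => //; [exact: mDset|exact: mle].
have : Defs.quantile P (Pf P (Dset s m)) <= v.
  by apply: ge_inf; [exact: quant_lb|split => //; rewrite hv0].
by rewrite leNgt hq.
Qed.
Lemma lemC2 (R : realType) (K : nat) (P : probability R R) (hP : cont_dist01 P)
  (s : R -> 'I_K.+1)
  (hmono : forall v w, 0 <= v -> v <= w -> w <= 1 -> (s v <= s w)%N)
  (hmeas : forall m, measurable [set v | (s v < m)%N]) m :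
  P (Dset s m `&` [set v | Defs.quantile P (Pf P (Dset s m)) < v]) = 0%E.
Proof.
set y := Pf P (Dset s m).
set tau := Defs.quantile P y.
have mD := mDset m hmeas.
have hS1 : [set v : R | 0 <= v <= 1 /\ y <= Defs.cdf P v] 1.
  split; first by rewrite ler01 lexx.
  apply: Pf_le => //; first exact: mle.
  by move=> w [/in01/andP[_ hw1] _].
have hinf : has_inf [set v : R | 0 <= v <= 1 /\ y <= Defs.cdf P v].
  by split; [exists 1|exact: quant_lb].
have mA : measurable (Dset s m `&` [set v | tau < v]) by apply: measurableI => //; exact: mlt.
apply/negligibleP => //.
apply: (@negligibleS _ _ _ _ (\bigcup_k (Dset s m `&` [set v | tau + k.+1%:R^-1 < v]))).
  move=> v [hv /= htv]; have [k hk] := ltr_add_invr htv.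
  by exists k => //; split.
apply: negligible_bigcup => k.
have he : 0 < (k.+1%:R : R)^-1 by rewrite invr_gt0 ltr0Sn.
have [w [/andP[hw0 hw1] hwy] hwt] := inf_adherent he hinf.
exists (Dset s m `&` [set v | w < v]); split.
- by apply: measurableI => //; exact: mlt.
- by apply: lemE => //; rewrite hw0.
- move=> v [hv /= hv2]; split => //=; apply: lt_trans hv2.
  exact: hwt.
Qed.
Lemma PiY (R : realType) (K : nat) (Y : nat -> R) (j : nat) : (j <= K.+1)%N ->
  Pi (fun l : 'I_K.+1 => Y l.+1 - Y l) j = Y j - Y 0.
Proof.
move=> hj; rewrite /Pi.
rewrite -(big_ord_widen _ (fun l => Y l.+1 - Y l) hj).
by rewrite -(big_mkord xpredT (fun l => Y l.+1 - Y l)) telescope_sumr.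
Qed.
Lemma qrep (R : realType) (K : nat) (P : probability R R) (hP : cont_dist01 P)
  (s : R -> 'I_K.+1)
  (hmono : forall v w, 0 <= v -> v <= w -> w <= 1 -> (s v <= s w)%N)
  (hmeas : forall m, measurable [set v | (s v < m)%N]) :
  exists pi0 : 'I_K.+1 -> R, simplex pi0 /\
  exists N : set R, measurable N /\ P N = 0%E /\
    forall v, 0 <= v <= 1 -> ~ N v -> qstrat P pi0 v = s v.
Proof.
pose Y m := Pf P (Dset s m).
pose tau m := Defs.quantile P (Y m).
have Y0 : Y 0%N = 0.
  rewrite /Y (_ : Dset s 0 = set0); first by rewrite /Pf measure0.
  by apply/seteqP; split => v // [_].
have YK : Y K.+1 = 1.
  rewrite /Y (_ : Dset s K.+1 = `[0, 1]%classic) ?Pf01 //.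
  apply/seteqP; split => v; first by case.
  by move=> hv; split => //=; exact: ltn_ord.
have Ymono : forall m, Y m <= Y m.+1.
  move=> m; apply: Pf_le; [exact: mDset|exact: mDset|].
  by move=> v [hv hm]; split => //=; exact: ltnW.
pose pi0 := fun l : 'I_K.+1 => Y l.+1 - Y l.
have hPi : forall j, (j <= K.+1)%N -> Pi pi0 j = Y j.
  by move=> j hj; rewrite PiY // Y0 subr0.
exists pi0; split.
  split; first by move=> l; rewrite subr_ge0.
  rewrite -[RHS]YK -(hPi K.+1 (leqnn _)).
  by apply: eq_bigl => l; rewrite ltn_ord.
pose F m := (Dset s m `&` [set v | tau m < v]) `|` [set tau m].
have mF : measurable (\bigcup_m F m).
  apply: bigcupT_measurable => m; apply: measurableU; last exact: measurable_set1.
  by apply: measurableI; [exact: mDset|exact: mlt].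
exists (\bigcup_m F m); split => //; split.
  apply/negligibleP => //.
  apply: negligible_bigcup => m; apply: negligibleU; apply/negligibleP.
  - by apply: measurableI; [exact: mDset|exact: mlt].
  - exact: lemC2.
  - exact: measurable_set1.
  - by case: hP => _; apply.
move=> v /andP[hv0 hv1] hN.
have hv01 : `[0, 1]%classic v by apply/in01; rewrite hv0.
have key : forall m, (s v < m)%N = (v <= tau m).
  move=> m; apply/idP/idP => h.
    rewrite leNgt; apply/negP => ht; apply: hN; exists m => //; left; split => //.
  have hne : v != tau m.
    by apply/negP => /eqP he; apply: hN; exists m => //; right.
  have hlt : v < tau m by rewrite lt_neqAle hne h.
  by case: (lemC1 hmono hmeas (m := m) (v := v) _ hlt) => //; rewrite hv0.
rewrite /qstrat.
have -> : [pick j | qinterval P pi0 j v] = [pick j | s v == j].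
  apply: eq_pick => j; rewrite /qinterval.
  case hj0: (j == 0 :> nat).
    rewrite hPi // -/(tau 1%N) -key hv0 /=.
    by move/eqP: hj0 => hj0; apply/idP/eqP => [|->]; [rewrite ltnS leqn0 => /eqP h; apply: val_inj; rewrite /= h hj0|rewrite hj0].
  rewrite !hPi ?(ltnW (ltn_ord j)) ?(ltn_ord j) // -/(tau j) -/(tau j.+1) ltNge -!key.
  by rewrite -leqNgt ltnS andbC -eqn_leq.
case: pickP => [j /eqP -> //| H].
by have := H (s v); rewrite eqxx.
Qed.
Lemma Rint_sum (R : realType) (P : probability R R) (D : set R) (I : Type) (r : seq I)
  (h : I -> R -> R) : measurable D ->
  (forall t, P.-integrable D (EFin \o h t)) ->
  Rintegral P D (fun v => \sum_(t <- r) h t v) = \sum_(t <- r) Rintegral P D (h t).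
Proof.
move=> mD hi; elim: r => [|t r IH].
  rewrite big_nil; under eq_Rintegral do rewrite big_nil.
  by rewrite Rintegral_cst // mul0r.
rewrite big_cons -IH; under eq_Rintegral do rewrite big_cons.
rewrite RintegralD //.
have -> : (EFin \o (fun v => \sum_(t <- r) h t v)) = (fun v => \sum_(t <- r) (EFin \o h t) v)%E.
  by apply/funext => v /=; rewrite sumEFin.
apply: integrable_sum => [|k _]; last exact: hi.
exact: mD.
Qed.
Unset Implicit Arguments.
Theorem mainTheorem4 (R : realType) (n K T : nat) (hK : (0 < K)%N)
  (i : 'I_n) (P : probability R R) (hP : cont_dist01 P)
  (x p : 'I_T -> profile n K -> 'I_n -> R)
  (hfmt : forall t, is_format (x t) (p t))
  (hmon : forall t, alloc_monotone (x t))
  (bmi : 'I_T -> profile n K)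
  (pit : 'I_T -> 'I_K.+1 -> R) (hpit : forall t, simplex (pit t)) :
  let regS := fun s : R -> 'I_K.+1 =>
    \sum_(t < T) (utility P (x t) (p t) i (bmi t) s
                  - utility P (x t) (p t) i (bmi t) (qstrat P (pit t))) in
  let regQ := fun pi : 'I_K.+1 -> R =>
    \sum_(t < T) (qutility P (x t) (p t) i (bmi t) pi
                  - qutility P (x t) (p t) i (bmi t) (pit t)) in
  exists s0 : R -> 'I_K.+1, strategy_measurable s0 /\
    (forall s, strategy_measurable s -> regS s <= regS s0) /\
  exists pi0 : 'I_K.+1 -> R, simplex pi0 /\
    (forall pi, simplex pi -> regQ pi <= regQ pi0) /\
    regS s0 = regQ pi0.
Proof.
move=> regS regQ.
pose g (j : 'I_K.+1) (v : R) :=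
  \sum_(t < T) (x t (upd (bmi t) i j) i * v - p t (upd (bmi t) i j) i).
pose a (j : 'I_K.+1) := \sum_(t < T) x t (upd (bmi t) i j) i.
pose c (j : 'I_K.+1) := \sum_(t < T) p t (upd (bmi t) i j) i.
have hg : forall j v, g j v = a j * v - c j.
  by move=> j v; rewrite /g sumrB mulr_suml.
have ha : forall j k : 'I_K.+1, (j <= k)%N -> a j <= a k.
  by move=> j k hjk; apply: ler_sum => t _; exact: hmon.
have mg : forall j, measurable_fun setT (g j).
  move=> j; have -> : g j = (fun v => a j * v - c j) by apply/funext => v; exact: hg.
  apply: measurable_funB; last exact: measurable_cst.
  by apply: measurable_funM => //; exact: measurable_cst.
have hmono : forall v w, 0 <= v -> v <= w -> w <= 1 -> (sstar g v <= sstar g w)%N.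
  by move=> v w _ hvw _; exact: (sstar_mono hg ha hvw).
have hmeas : forall m, measurable [set v | (sstar g v < m)%N].
  case=> [|m]; first by rewrite (_ : [set v | _] = set0) //; apply/seteqP; split.
  by apply: mset_of_bool; exact: sstar_meas.
have [pi0 [hpi0 [N [mN [PN hN]]]]] := qrep hP hmono hmeas.
pose f (t : 'I_T) (s : R -> 'I_K.+1) (v : R) :=
  x t (upd (bmi t) i (s v)) i * v - p t (upd (bmi t) i (s v)) i.
have mI : measurable (`[0, 1]%classic : set R) by exact: measurable_itv.
have key : forall s, strategy_measurable s -> regS s <= regS (qstrat P pi0).
  move=> s hs; rewrite -subr_ge0.
  have -> : regS (qstrat P pi0) - regS s =
      \sum_(t < T) (Rintegral P `[0, 1]%classic (f t (qstrat P pi0)) -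
                    Rintegral P `[0, 1]%classic (f t s)).
    by rewrite /regS -sumrB; apply: eq_bigr => t _; rewrite /utility; lra.
  have hint : forall t s', strategy_measurable s' ->
      P.-integrable `[0, 1]%classic (EFin \o f t s').
    by move=> t s' hs'; exact: integ_util.
  have hint2 : forall t, P.-integrable `[0, 1]%classic
      (EFin \o (fun v => f t (qstrat P pi0) v - f t s v)).
    move=> t; have -> : (EFin \o (fun v => f t (qstrat P pi0) v - f t s v)) =
      ((EFin \o f t (qstrat P pi0)) \- (EFin \o f t s))%E by apply/funext.
    by apply: integrableB => //; apply: hint => //; exact: qstrat_meas.
  have -> : \sum_(t < T) (Rintegral P `[0, 1]%classic (f t (qstrat P pi0)) -
                    Rintegral P `[0, 1]%classic (f t s)) =
     \sum_(t < T) Rintegral P `[0, 1]%classic (fun v => f t (qstrat P pi0) v - f t s v).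
    apply: eq_bigr => t _; rewrite [RHS]RintegralB //;
      by first [exact: mI | exact: hint | (apply: hint; exact: qstrat_meas)].
  rewrite -Rint_sum //.
  pose hd t v := f t (qstrat P pi0) v - f t s v.
  rewrite /Rintegral (negligible_integral (N := N)) //; last first.
    have -> : (fun v => (\sum_(t < T) (f t (qstrat P pi0) v - f t s v))%:E) =
      (fun v => \sum_(t < T) (EFin \o hd t) v)%E.
      by apply/funext => v /=; rewrite sumEFin.
    apply: integrable_sum => [|t _]; last exact: hint2.
    exact: mI.
  apply: fine_ge0; apply: integral_ge0 => v [/in01 hv hnv]; rewrite lee_fin.
  rewrite sumrB /f (hN v hv hnv) -!/(g _ v).
  rewrite subr_ge0; have [hm _] := sstar_spec g v; move/forallP: hm; apply.
exists (qstrat P pi0); split; first exact: qstrat_meas.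
split; first exact: key.
exists pi0; split => //; split => //.
by move=> pi _; apply: key; exact: qstrat_meas.
Qed.
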